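(* Let $g_1,f_1,f_2$ be real numbers with $f_1\neq 0$, and let $g(t)=1+g_1t$ and $f(t)=f_1t+f_2t^2$. Then the quasi-Riordan array $[g,f]$, i.e. the infinite lower triangular matrix \[ [g,f]=\begin{bmatrix} 1& & & & \\ g_1 & f_1 & & & \\ 0& f_2& f_1 & & \\ 0&0 & f_2 & f_1&\\ \vdots& &\ddots &\ddots &\ddots\end{bmatrix}, \] is totally positive if and only if $g_1\ge 0$, $f_1\ge 0$ and $f_2\ge 0$.
   Context: For formal power series $g(t)=\sum_{n\ge0}g_nt^n$ with $g_0=1$ and $f(t)=\sum_{n\ge1}f_nt^n$ with $f_1\neq0$, the quasi-Riordan array $[g,f]$ is the infinite lower triangular matrix $(r_{n,k})_{n,k\ge0}$ whose $0$th column has generating function $g$ and whose $k$th column ($k\ge1$) has generating function $t^{k-1}f(t)$; i.e. $r_{n,0}=g_n$ and $r_{n,k}=f_{n-k+1}$ for $k\ge1$ (with $f_j=0$ for $j\le 0$). An infinite matrix is totally positive (TP) if all its minors (of all orders) are nonnegative. *)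

(* Defs.v *)
From HB Require Import structures.
From mathcomp Require Import all_boot all_order all_algebra.
From mathcomp Require Import reals.
Set Implicit Arguments. Unset Strict Implicit. Unset Printing Implicit Defensive.
Import Order.TTheory GRing.Theory Num.Theory.
Local Open Scope ring_scope.

Definition infmx (R : Type) := nat -> nat -> R.

Definition quasiRiordan (R : pzRingType) (g f : nat -> R) : infmx R :=
  fun n k => if k == 0%N then g n
             else if (k <= n)%N then f (n - k + 1)%N else 0.

Definition totally_positive (R : numDomainType) (M : infmx R) : Prop :=
  forall (m : nat) (rows cols : 'I_m -> nat),
    (forall a b : 'I_m, (a < b)%N -> (rows a < rows b)%N) ->
    (forall a b : 'I_m, (a < b)%N -> (cols a < cols b)%N) ->
    0 <= \det (\matrix_(a < m, b < m) M (rows a) (cols b)).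

(* Main.v *)
Require Import Defs.
From HB Require Import structures.
From mathcomp Require Import all_boot all_order all_algebra.
From mathcomp Require Import reals.
From mathcomp Require Import zify.
Import Order.TTheory GRing.Theory Num.Theory.
Local Open Scope ring_scope.

Lemma det_step (R : comPzRingType) n (A : 'M[R]_n.+1) :
  (forall j : 'I_n.+1, j != ord0 -> A ord0 j = 0) \/
  (forall i : 'I_n.+1, i != ord0 -> A i ord0 = 0) ->
  \det A = A ord0 ord0 * \det (\matrix_(i < n, j < n) A (lift ord0 i) (lift ord0 j)).
Proof.
case=> H.
  rewrite (expand_det_row _ ord0) (bigD1 ord0) //= big1 ?addr0; last first.
    by move=> j hj; rewrite H // mul0r.
  rewrite /cofactor /= expr0 mul1r; congr (_ * \det _).
  by apply/matrixP => i j; rewrite !mxE.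
rewrite (expand_det_col _ ord0) (bigD1 ord0) //= big1 ?addr0; last first.
  by move=> j hj; rewrite H // mul0r.
rewrite /cofactor /= expr0 mul1r; congr (_ * \det _).
by apply/matrixP => i j; rewrite !mxE.
Qed.

Lemma tp_band (R : numDomainType) (M : infmx R) :
  (forall i j, 0 <= M i j) ->
  (forall i j, (i < j)%N -> M i j = 0) ->
  (forall i j, (j.+1 < i)%N -> M i j = 0) ->
  totally_positive M.
Proof.
move=> h0 hu hl m; elim: m => [|m IH] rows cols hr hc.
  by rewrite det_mx00 ler01.
rewrite det_step; last first.
  case: (ltnP (cols ord0) (rows ord0)) => hrc.
    right => i hi; rewrite mxE; apply: hl.
    have : (0 < i)%N by rewrite lt0n.
    move=> /(hr ord0 i) /=; lia.
  left => j hj; rewrite mxE; apply: hu.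
  have : (0 < j)%N by rewrite lt0n.
  move=> /(hc ord0 j) /=; lia.
apply: mulr_ge0; first by rewrite mxE.
have := IH (fun a => rows (lift ord0 a)) (fun a => cols (lift ord0 a)).
have -> : \matrix_(i < m, j < m)
    (\matrix_(a < m.+1, b < m.+1) M (rows a) (cols b)) (lift ord0 i) (lift ord0 j)
  = \matrix_(a < m, b < m) M (rows (lift ord0 a)) (cols (lift ord0 b)).
  by apply/matrixP => i j; rewrite !mxE.
apply.
  by move=> a b ab; apply: hr; rewrite !lift0 ltnS.
by move=> a b ab; apply: hc; rewrite !lift0 ltnS.
Qed.

Theorem corollary2p2 (R : realType) (g1 f1 f2 : R) :
  f1 != 0 ->
  (totally_positive
     (quasiRiordan (fun n => (1 + g1 *: 'X : {poly R})`_n)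
                   (fun n => (f1 *: 'X + f2 *: 'X^2 : {poly R})`_n))
   <-> [/\ 0 <= g1, 0 <= f1 & 0 <= f2]).
Proof.
move=> _; split.
  move=> tp.
  have E : forall r c, 0 <= quasiRiordan (fun n => (1 + g1 *: 'X : {poly R})`_n)
                   (fun n => (f1 *: 'X + f2 *: 'X^2 : {poly R})`_n) r c.
    move=> r c; have := tp 1%N (fun _ => r) (fun _ => c).
    rewrite det_mx11 mxE; apply.
      by move=> a b; rewrite !ord1.
    by move=> a b; rewrite !ord1.
  have := E 1%N 0%N; have := E 1%N 1%N; have := E 2%N 1%N.
  rewrite /quasiRiordan /= !coefD !coefZ coef1 coefX coefXn /=.
  rewrite !coefX !coefXn /= ?mulr0 ?mulr1 ?addr0 ?add0r.
  by move=> *; split.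
case=> hg hf1 hf2; apply: tp_band.
- move=> i j; rewrite /quasiRiordan.
  case: ifP => _.
    by rewrite coefD coefZ coef1 coefX addr_ge0 ?ler0n ?mulr_ge0 ?ler0n.
  case: ifP => _ //.
  by rewrite coefD !coefZ coefX coefXn addr_ge0 ?mulr_ge0 ?ler0n.
- move=> i j ij; rewrite /quasiRiordan.
  have -> : (j == 0%N) = false by apply/negbTE; lia.
  by have -> : (j <= i)%N = false by apply/negbTE; lia.
- move=> i j ij; rewrite /quasiRiordan.
  case: ifP => j0.
    rewrite coefD coefZ coef1 coefX.
    have -> : (i == 0%N) = false by apply/negbTE; lia.
    have -> : (i == 1%N) = false by apply/negbTE; lia.
    by rewrite mulr0 addr0.
  have -> : (j <= i)%N = true by lia.
  rewrite coefD !coefZ coefX coefXn.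
  have -> : (i - j + 1 == 1)%N = false by apply/negbTE; lia.
  have -> : (i - j + 1 == 2)%N = false by apply/negbTE; lia.
  by rewrite !mulr0 addr0.
Qed.
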